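(* Let $\Phi:\{0,1\}^n\to\{0,1\}^n$, $\mu\in\{0,1\}^n$ and $\rho\in P_n$. Then: a) $\overline{W}[\Phi^\rho(\mu,\cdot)]$ is p-invariant; b) if $\underline{W}[\Phi^\rho(\mu,\cdot)]\neq\emptyset$, then $\underline{W}[\Phi^\rho(\mu,\cdot)]$ is n-invariant; c) if $\underline{W}[\omega_\rho(\mu)]\neq\emptyset$, then $\underline{W}[\omega_\rho(\mu)]$ is n-invariant.
   Context: Let $\mathbf{B}=\{0,1\}$ (discrete topology), $n\ge1$, $\Phi:\mathbf{B}^n\to\mathbf{B}^n$. For $\nu\in\mathbf{B}^n$: $\Phi^\nu_i(\mu)=\mu_i$ if $\nu_i=0$, $=\Phi_i(\mu)$ if $\nu_i=1$; $\Phi^{\alpha^0\dots\alpha^k}=\Phi^{\alpha^k}\circ\cdots\circ\Phi^{\alpha^0}$. A sequence $(\alpha^k)_{k\in\mathbf{N}}$ in $\mathbf{B}^n$ is progressive if each $\{k:\alpha^k_i=1\}$ is infinite. $Seq$ = strictly increasing real sequences unbounded above. $P_n$ = functions $\rho:\mathbf{R}\to\mathbf{B}^n$ with $\rho(t_k)=\alpha^k$, $\rho(t)=0$ for $t\notin\{t_k\}$, $\alpha$ progressive, $(t_k)\in Seq$. Orbit: $\Phi^\rho(\mu,t)=\mu$ for $t<t_0$, $=\Phi^{\alpha^0\dots\alpha^k}(\mu)$ for $t\in[t_k,t_{k+1})$; $Or_\rho(\mu)=\{\Phi^\rho(\mu,t):t\in\mathbf{R}\}$. $\omega_\rho(\mu)=\{\mu':\exists(s_k)\in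 Seq,\ \Phi^\rho(\mu,s_k)=\mu'$ for all large $k\}$. Basins: $\overline{W}[\Phi^\rho(\mu,\cdot)]=\{\mu':\exists\rho'\in P_n,\exists t',\forall t\ge t',\ \Phi^{\rho'}(\mu',t)=\Phi^\rho(\mu,t)\}$, $\underline{W}[\Phi^\rho(\mu,\cdot)]=\{\mu':\forall\rho'\in P_n,\exists t',\forall t\ge t',\ \Phi^{\rho'}(\mu',t)=\Phi^\rho(\mu,t)\}$, $\underline{W}[\omega_\rho(\mu)]=\{\mu':\forall\rho'\in P_n,\ \omega_{\rho'}(\mu')=\omega_\rho(\mu)\}$. A nonempty set $A\subset\mathbf{B}^n$ is p-invariant if for every $\mu\in A$ there is $\rho\in P_n$ with $Or_\rho(\mu)\subset A$, and n-invariant if for every $\mu\in A$ and every $\rho\in P_n$, $Or_\rho(\mu)\subset A$. *)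

(* Defs.v *)
From Stdlib Require Import Reals ClassicalEpsilon.
From mathcomp Require Import all_boot.

Set Implicit Arguments.
Unset Strict Implicit.
Unset Printing Implicit Defensive.

Definition vec (n : nat) := {ffun 'I_n -> bool}.

Definition zerov (n : nat) : vec n := [ffun _ => false].

Definition Phi_nu (n : nat) (Phi : vec n -> vec n) (nu : vec n) (mu : vec n)
  : vec n := [ffun i => if nu i then Phi mu i else mu i].

Fixpoint Phi_seq (n : nat) (Phi : vec n -> vec n) (alpha : nat -> vec n)
  (k : nat) (mu : vec n) : vec n :=
  match k with
  | 0 => Phi_nu Phi (alpha 0) mu
  | S k' => Phi_nu Phi (alpha (S k')) (Phi_seq Phi alpha k' mu)
  end.

Definition progressive (n : nat) (alpha : nat -> vec n) : Prop :=
  forall (i : 'I_n) (k : nat), exists k', (k <= k')%N /\ alpha k' i = true.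

Definition Seq (t : nat -> R) : Prop :=
  (forall k, Rlt (t k) (t (S k))) /\ (forall M : R, exists k, Rlt M (t k)).

(* An element rho of P_n is given by its data (alpha, t): rho(t_k) = alpha^k,
   rho(s) = 0 for s not in {t_k}.  inP alpha t says the data is admissible. *)
Definition inP (n : nat) (alpha : nat -> vec n) (t : nat -> R) : Prop :=
  progressive alpha /\ Seq t.

Definition rho_of (n : nat) (alpha : nat -> vec n) (t : nat -> R) (s : R)
  : vec n :=
  match excluded_middle_informative (exists k, t k = s) with
  | left H => alpha (proj1_sig (constructive_indefinite_description _ H))
  | right _ => zerov n
  end.

(* the orbit Phi^rho(mu, s): mu for s < t_0, Phi^{alpha^0..alpha^k}(mu) for
   s in [t_k, t_{k+1}) *)
Definition orbit (n : nat) (Phi : vec n -> vec n) (alpha : nat -> vec n)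
  (t : nat -> R) (mu : vec n) (s : R) : vec n :=
  if Rlt_dec s (t 0) then mu
  else Phi_seq Phi alpha
         (epsilon (inhabits 0%N) (fun k => Rle (t k) s /\ Rlt s (t (S k)))) mu.

Definition Or (n : nat) (Phi : vec n -> vec n) (alpha : nat -> vec n)
  (t : nat -> R) (mu : vec n) (nu : vec n) : Prop :=
  exists s : R, orbit Phi alpha t mu s = nu.

Definition omega (n : nat) (Phi : vec n -> vec n) (alpha : nat -> vec n)
  (t : nat -> R) (mu : vec n) (mu' : vec n) : Prop :=
  exists s : nat -> R, Seq s /\
    exists K, forall k, (K <= k)%N -> orbit Phi alpha t mu (s k) = mu'.

Definition W_over (n : nat) (Phi : vec n -> vec n) (alpha : nat -> vec n)
  (t : nat -> R) (mu : vec n) (mu' : vec n) : Prop :=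
  exists (alpha' : nat -> vec n) (t' : nat -> R), inP alpha' t' /\
    exists s0 : R, forall s : R, Rle s0 s ->
      orbit Phi alpha' t' mu' s = orbit Phi alpha t mu s.

Definition W_under (n : nat) (Phi : vec n -> vec n) (alpha : nat -> vec n)
  (t : nat -> R) (mu : vec n) (mu' : vec n) : Prop :=
  forall (alpha' : nat -> vec n) (t' : nat -> R), inP alpha' t' ->
    exists s0 : R, forall s : R, Rle s0 s ->
      orbit Phi alpha' t' mu' s = orbit Phi alpha t mu s.

Definition W_under_omega (n : nat) (Phi : vec n -> vec n)
  (alpha : nat -> vec n) (t : nat -> R) (mu : vec n) (mu' : vec n) : Prop :=
  forall (alpha' : nat -> vec n) (t' : nat -> R), inP alpha' t' ->
    forall nu, omega Phi alpha' t' mu' nu <-> omega Phi alpha t mu nu.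

Definition p_invariant (n : nat) (Phi : vec n -> vec n) (A : vec n -> Prop)
  : Prop :=
  (exists mu, A mu) /\
  forall mu, A mu -> exists (alpha : nat -> vec n) (t : nat -> R),
    inP alpha t /\ forall nu, Or Phi alpha t mu nu -> A nu.

Definition n_invariant (n : nat) (Phi : vec n -> vec n) (A : vec n -> Prop)
  : Prop :=
  (exists mu, A mu) /\
  forall mu, A mu -> forall (alpha : nat -> vec n) (t : nat -> R),
    inP alpha t -> forall nu, Or Phi alpha t mu nu -> A nu.

(* Main.v *)
From Stdlib Require Import Reals Lra ClassicalEpsilon.
From mathcomp Require Import all_boot.
From mathcomp Require Import zify.
Delimit Scope R_scope with Re.
Require Import Defs.
Set Implicit Arguments.
Unset Strict Implicit.

Section Aux.
Variable n : nat.
Variable Phi : vec n -> vec n.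

Lemma t_mono (t : nat -> R) : (forall k, (t k < t (S k))%Re) ->
  forall i j, (i < j)%N -> (t i < t j)%Re.
Proof.
move=> Ht i j; elim: j => [|j IH] //= Hij.
have [->|Hlt] : i = j \/ (i < j)%N by lia.
  exact: Ht.
have := IH Hlt; have := Ht j; lra.
Qed.

Lemma t_mono_le (t : nat -> R) : (forall k, (t k < t (S k))%Re) ->
  forall i j, (i <= j)%N -> (t i <= t j)%Re.
Proof.
move=> Ht i j Hij.
have [->|Hlt] : i = j \/ (i < j)%N by lia.
  lra.
have := t_mono Ht Hlt; lra.
Qed.

Lemma idx_unique (t : nat -> R) : (forall k, (t k < t (S k))%Re) ->
  forall k k' s, (t k <= s < t (S k))%Re -> (t k' <= s < t (S k'))%Re -> k = k'.
Proof.
move=> Ht k k' s H1 H2.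
have [Hl|[Hl|Hl]] : (k < k')%N \/ k = k' \/ (k' < k)%N by lia.
- have := t_mono_le Ht (i:=S k) (j:=k') Hl; lra.
- by [].
- have := t_mono_le Ht (i:=S k') (j:=k) Hl; lra.
Qed.

Lemma orbit_at (a : nat -> vec n) (t : nat -> R) (mu : vec n) k s :
  (forall k, (t k < t (S k))%Re) -> (t k <= s < t (S k))%Re ->
  orbit Phi a t mu s = Phi_seq Phi a k mu.
Proof.
move=> Ht Hs; rewrite /orbit.
case: Rlt_dec => H.
  have := t_mono_le Ht (leq0n k); lra.
set P := fun k => _.
have HP : P (epsilon (inhabits 0%N) P) by apply: epsilon_spec; exists k.
by rewrite (idx_unique Ht HP Hs).
Qed.

Lemma idx_exists (t : nat -> R) (s : R) : Seq t -> (t O <= s)%Re ->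
  exists k, (t k <= s < t (S k))%Re.
Proof.
move=> [Ht Hu] H0; have [K HK] := Hu s.
elim: K HK => [|K IH] HK; first lra.
case: (Rle_dec (t K) s) => H; first by exists K; lra.
apply: IH; lra.
Qed.

Lemma Phi_seq_ext (a b : nat -> vec n) k (mu : vec n) :
  (forall i, (i <= k)%N -> a i = b i) -> Phi_seq Phi a k mu = Phi_seq Phi b k mu.
Proof.
elim: k => [|k IH] H /=; first by rewrite H.
by rewrite H // IH // => i Hi; apply: H; lia.
Qed.

Lemma Phi_seq_split (c : nat -> vec n) m j (mu : vec n) :
  Phi_seq Phi c (m + S j) mu =
  Phi_seq Phi (fun j => c (m + S j)%N) j (Phi_seq Phi c m mu).
Proof.
elim: j => [|j IH].
  by rewrite /= addn1.
rewrite [in LHS]addnS /= IH; by rewrite -addnS.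
Qed.

Lemma shift_lemma (a : nat -> vec n) (t : nat -> R) (mu : vec n) s1 :
  inP a t -> exists b tb, inP b tb /\ exists T, forall s, (T <= s)%Re ->
    orbit Phi b tb (orbit Phi a t mu s1) s = orbit Phi a t mu s.
Proof.
move=> [Hpr [Ht Hu]].
case: (Rlt_dec s1 (t O)) => Hs1.
  exists a, t; split; first by split => //; split.
  have -> : orbit Phi a t mu s1 = mu by rewrite /orbit; case: Rlt_dec.
  by exists 0%Re.
have [k Hk] := idx_exists (t:=t) (s:=s1) (conj Ht Hu) (Rnot_lt_le _ _ Hs1).
rewrite (orbit_at a mu Ht Hk).
exists (fun j => a (k + S j)%N), (fun j => t (k + S j)%N); split.
  split.
  - move=> i K; have [k' [Hk' Ha]] := Hpr i (k + S K)%N.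
    exists (k' - S k)%N; split; first lia.
    by have -> : (k + S (k' - S k))%N = k' by lia.
  - split; first by move=> j; rewrite (addnS k j.+1); apply: Ht.
    move=> M; have [K HK] := Hu M; exists K.
    have := t_mono_le Ht (i:=K) (j:=(k + S K)%N) ltac:(lia); lra.
exists (t (k + 1)%N) => s Hs.
have Hb : Seq (fun j => t (k + S j)%N).
  split; first by move=> j; rewrite (addnS k j.+1); apply: Ht.
  move=> M; have [K HK] := Hu M; exists K.
  have := t_mono_le Ht (i:=K) (j:=(k + S K)%N) ltac:(lia); lra.
have [j Hj] := idx_exists (t:=fun j => t (k + S j)%N) (s:=s) Hb Hs.
rewrite (orbit_at _ _ (proj1 Hb) Hj) -Phi_seq_split.
symmetry; apply: orbit_at => //.
by rewrite -addnS.
Qed.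

Lemma Rmax_strict a b c d : (a < c)%Re -> (b < d)%Re -> (Rmax a b < Rmax c d)%Re.
Proof. rewrite /Rmax; do 2 case: Rle_dec; lra. Qed.

Lemma g_strict (D : R) j :
  (D + 1 - / (INR j + 2) < D + 1 - / (INR (S j) + 2))%Re.
Proof.
rewrite S_INR; have := pos_INR j => H.
have : (/ (INR j + 1 + 2) < / (INR j + 2))%Re.
  apply: Rinv_lt_contravar; nra.
lra.
Qed.

Lemma g_bounds (D : R) j :
  (D < D + 1 - / (INR j + 2) < D + 1)%Re.
Proof.
have := pos_INR j => H.
have H1 : (0 < / (INR j + 2))%Re by apply: Rinv_0_lt_compat; lra.
have H2 : (/ (INR j + 2) < 1)%Re.
  rewrite -Rinv_1; apply: Rinv_lt_contravar; lra.
lra.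
Qed.

Lemma combine_lemma (a : nat -> vec n) (t : nat -> R) (mu : vec n) s1
  (a2 : nat -> vec n) (t2 : nat -> R) :
  inP a t -> inP a2 t2 -> exists c tc, inP c tc /\ exists T, forall s, (T <= s)%Re ->
    orbit Phi c tc mu s = orbit Phi a2 t2 (orbit Phi a t mu s1) s.
Proof.
move=> [Hpr [Ht Hu]] [Hpr2 [Ht2 Hu2]].
case: (Rlt_dec s1 (t O)) => Hs1.
  exists a2, t2; split; first by split => //; split.
  have -> : orbit Phi a t mu s1 = mu by rewrite /orbit; case: Rlt_dec.
  by exists 0%Re.
have [k Hk] := idx_exists (t:=t) (s:=s1) (conj Ht Hu) (Rnot_lt_le _ _ Hs1).
rewrite (orbit_at a mu Ht Hk).
set D := t k.
pose g j := (D + 1 - / (INR j + 2))%Re.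
pose c i := if (i <= k)%N then a i else a2 (i - S k)%N.
pose tc i := if (i <= k)%N then t i else Rmax (t2 (i - S k)%N) (g (i - S k)%N).
have Htc : forall i, (tc i < tc (S i))%Re.
  move=> i; rewrite /tc.
  have [Hik|[Hik|Hik]] : (i < k)%N \/ (k < i)%N \/ i = k by lia.
  - have -> : (i <= k)%N by lia.
    have -> : (i.+1 <= k)%N by lia. exact: Ht.
  - have -> : (i <= k)%N = false by lia.
    have -> : (i.+1 <= k)%N = false by lia.
    have -> : (i.+1 - S k = S (i - S k))%N by lia.
    apply: Rmax_strict; [exact: Ht2 | exact: g_strict].
  - rewrite {}Hik leqnn; have -> : (k.+1 <= k)%N = false by lia.
    rewrite subnn; have := g_bounds D 0; rewrite /g /D.
    have := Rmax_r (t2 O) (t k + 1 - / (INR O + 2)); lra.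
have Htcu : forall M, exists k0, (M < tc k0)%Re.
  move=> M; have [K HK] := Hu2 M; exists (k + S K)%N; rewrite /tc.
  have -> : (k + S K <= k)%N = false by lia.
  have -> : (k + S K - S k = K)%N by lia.
  have := Rmax_l (t2 K) (g K); lra.
exists c, tc; split.
  split; last by split.
  move=> i K; have [k' [Hk' Ha]] := Hpr2 i K.
  exists (k + S k')%N; split; first lia.
  rewrite /c; have -> : (k + S k' <= k)%N = false by lia.
  by have -> : (k + S k' - S k = k')%N by lia.
have [j0 Hj0] := Hu2 (D + 1)%Re.
exists (t2 j0) => s Hs.
have Ht20 := t_mono_le Ht2 (leq0n j0).
have [j Hj] := idx_exists (t:=t2) (s:=s) (conj Ht2 Hu2) ltac:(lra).
have Hjj : (j0 <= j)%N.
  case: (leqP j0 j) => // Hlt.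
  have := t_mono_le Ht2 (i:=S j) (j:=j0) Hlt; lra.
have Hgt : (D + 1 < t2 j)%Re by have := t_mono_le Ht2 Hjj; lra.
rewrite (orbit_at _ _ Ht2 Hj).
rewrite (@orbit_at c tc mu (k + S j)%N s Htc).
  rewrite Phi_seq_split (@Phi_seq_ext c a k) ?(@Phi_seq_ext _ a2 j) //.
  - move=> i _; rewrite /c; have -> : (k + S i <= k)%N = false by lia.
    by have -> : (k + S i - S k = i)%N by lia.
  - by move=> i Hi; rewrite /c Hi.
rewrite /tc.
have -> : (k + S j <= k)%N = false by lia.
have -> : ((k + S j).+1 <= k)%N = false by lia.
have -> : (k + S j - S k = j)%N by lia.
have -> : ((k + S j).+1 - S k = S j)%N by lia.
have Hgt' : (D + 1 < t2 (S j))%Re by have := Ht2 j; lra.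
have := g_bounds D j; have := g_bounds D (S j).
rewrite /g /Rmax; do 2 case: Rle_dec; lra.
Qed.

Lemma omega_eventual (a b : nat -> vec n) ta tb (x y : vec n) T :
  (forall s, (T <= s)%Re -> orbit Phi a ta x s = orbit Phi b tb y s) ->
  forall nu, omega Phi a ta x nu -> omega Phi b tb y nu.
Proof.
move=> H nu [s [[Hs Hsu] [K HK]]].
exists s; split; first by split.
have [K' HK'] := Hsu T.
exists (maxn K K') => k Hk.
rewrite -H; first by apply: HK; lia.
have := t_mono_le Hs (i:=K') (j:=k) ltac:(lia); lra.
Qed.

End Aux.

Theorem theorem52 (n : nat) (Hn : (0 < n)%N) (Phi : vec n -> vec n)
  (mu : vec n) (alpha : nat -> vec n) (t : nat -> R) (Hrho : inP alpha t) :
  p_invariant Phi (W_over Phi alpha t mu) /\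
  ((exists mu', W_under Phi alpha t mu mu') ->
     n_invariant Phi (W_under Phi alpha t mu)) /\
  ((exists mu', W_under_omega Phi alpha t mu mu') ->
     n_invariant Phi (W_under_omega Phi alpha t mu)).
Proof.
split; [|split].
- split.
    by exists mu, alpha, t; split => //; exists 0%Re.
  move=> mu' [a' [t' [Hin [s0 Heq]]]].
  exists a', t'; split => // nu [s1 <-].
  have [b [tb [Hb [T HT]]]] := shift_lemma Phi mu' s1 Hin.
  exists b, tb; split => //; exists (Rmax T s0) => s Hs.
  rewrite HT; last by have := Rmax_l T s0; lra.
  apply: Heq; have := Rmax_r T s0; lra.
- move=> Hne; split => // mu' Hmu' a' t' Hin nu [s1 <-] a2 t2 Hin2.
  have [c [tc [Hc [T HT]]]] := combine_lemma Phi mu' s1 Hin Hin2.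
  have [s0 Hs0] := Hmu' c tc Hc.
  exists (Rmax T s0) => s Hs.
  rewrite -HT; last by have := Rmax_l T s0; lra.
  apply: Hs0; have := Rmax_r T s0; lra.
- move=> Hne; split => // mu' Hmu' a' t' Hin nu [s1 <-] a2 t2 Hin2 nu'.
  have [c [tc [Hc [T HT]]]] := combine_lemma Phi mu' s1 Hin Hin2.
  rewrite -(Hmu' c tc Hc nu'); split.
  + move=> Ho; eapply (omega_eventual (T:=T)); last exact: Ho.
    move=> s Hs; exact: (esym (HT s Hs)).
  + move=> Ho; eapply (omega_eventual (T:=T)); last exact: Ho.
    move=> s Hs; exact: (HT s Hs).
Qed.
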